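(* Let $I\subseteq\mathbb{R}$ be an open interval, let $f\colon I\to(0,\infty)$ be a differentiable, concave and strictly increasing function, let $s,t\in I$ with $s<t$, and let $\lambda\in(0,1)$. Then $$f((1-\lambda)s+\lambda t)\leq \frac{f'(s)}{f'(t)}\cdot\big((1-\lambda)f(s)+\lambda f(t)\big).$$ *)

(* Defs.v *)
From Stdlib Require Import Reals.
From Coquelicot Require Export Coquelicot.
Open Scope R_scope.

Definition is_open_interval (I : R -> Prop) : Prop :=
  exists a b : Rbar, forall x, I x <-> (Rbar_lt a x /\ Rbar_lt x b).

Definition concave_on (I : R -> Prop) (f : R -> R) : Prop :=
  forall x y l, I x -> I y -> 0 <= l <= 1 ->
    (1 - l) * f x + l * f y <= f ((1 - l) * x + l * y).

Definition strictly_increasing_on (I : R -> Prop) (f : R -> R) : Prop :=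
  forall x y, I x -> I y -> x < y -> f x < f y.

(* Main.v *)
Require Import Defs.
From Stdlib Require Import Reals Lra.
From Coquelicot Require Import Coquelicot.
Open Scope R_scope.

Lemma tangent (I : R -> Prop) (f : R -> R) x y :
  concave_on I f -> I x -> I y -> ex_derive f x ->
  f y <= f x + Derive f x * (y - x).
Proof.
  intros Hc Ix Iy Hex.
  destruct (Req_dec x y) as [<-|Hne].
  { replace (x - x) with 0 by ring. lra. }
  apply Rnot_lt_le; intro Hlt.
  set (l := Derive f x) in *. set (d := y - x).
  set (eps := f y - f x - l * d).
  assert (Heps : 0 < eps) by (unfold eps, d; lra).
  assert (Hr : derivable_pt_lim f x l).
  { apply is_derive_Reals. apply Derive_correct. exact Hex. }
  assert (Hd0 : d <> 0) by (unfold d; lra).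
  assert (Hdpos : 0 < Rabs d) by (apply Rabs_pos_lt; exact Hd0).
  destruct (Hr (eps / Rabs d)) as [delta Hdel].
  { apply Rdiv_lt_0_compat; lra. }
  pose proof (cond_pos delta) as Hdelta.
  set (k := Rmin 1 (delta / (2 * Rabs d))).
  assert (Hk0 : 0 < k).
  { apply Rmin_pos; [lra|]. apply Rdiv_lt_0_compat; lra. }
  assert (Hk1 : k <= 1) by apply Rmin_l.
  assert (Hk2 : k <= delta / (2 * Rabs d)) by apply Rmin_r.
  assert (Hkd : k * d <> 0) by (apply Rmult_integral_contrapositive; split; lra).
  assert (Habs : Rabs (k * d) < delta).
  { rewrite Rabs_mult, (Rabs_pos_eq k) by lra.
    apply Rle_lt_trans with (delta / (2 * Rabs d) * Rabs d).
    - apply Rmult_le_compat_r; lra.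
    - replace (delta / (2 * Rabs d) * Rabs d) with (delta / 2) by (field; lra). lra. }
  specialize (Hdel (k * d) Hkd Habs).
  pose proof (Hc x y k Ix Iy (conj (Rlt_le _ _ Hk0) Hk1)) as Hcc.
  replace ((1 - k) * x + k * y) with (x + k * d) in Hcc by (unfold d; ring).
  set (q := (f (x + k * d) - f x) / (k * d)) in *.
  assert (Hq1 : q * (k * d) = f (x + k * d) - f x) by (unfold q; field; lra).
  assert (Hq : (q - l) * d >= eps).
  { assert (H2 : k * ((q - l) * d - eps) >= 0).
    { replace (k * ((q - l) * d - eps)) with (q * (k * d) - k * (f y - f x))
        by (unfold eps; ring).
      rewrite Hq1. lra. }
    destruct (Rle_or_lt ((q - l) * d) eps) as [H3|H3]; [|lra].
    destruct H3 as [H3|H3]; [|lra].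
    assert (k * ((q - l) * d - eps) < 0).
    { nra. }
    lra. }
  assert (Rabs ((q - l) * d) < eps).
  { rewrite Rabs_mult.
    apply Rlt_le_trans with (eps / Rabs d * Rabs d).
    - apply Rmult_lt_compat_r; lra.
    - right. field. lra. }
  pose proof (Rle_abs ((q - l) * d)). lra.
Qed.

Theorem lemma6 (Iv : R -> Prop) (f : R -> R) (s t lam : R) :
  is_open_interval Iv ->
  (forall x, Iv x -> 0 < f x) ->
  (forall x, Iv x -> ex_derive f x) ->
  concave_on Iv f ->
  strictly_increasing_on Iv f ->
  Iv s -> Iv t -> s < t ->
  0 < lam < 1 ->
  f ((1 - lam) * s + lam * t)
    <= (Derive f s / Derive f t) * ((1 - lam) * f s + lam * f t).
Proof.
  intros [a [b HI]] Hpos Hder Hc Hinc Is It Hst Hlam.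
  set (m := (1 - lam) * s + lam * t).
  assert (Hsm : s < m) by (unfold m; nra).
  assert (Hmt : m < t) by (unfold m; nra).
  assert (Im : Iv m).
  { apply HI. apply HI in Is. apply HI in It. destruct Is as [Ha _]. destruct It as [_ Hb].
    split.
    - destruct a as [a| |]; simpl in *; try easy. lra.
    - destruct b as [b| |]; simpl in *; try easy. lra. }
  assert (Hy : exists y, Iv y /\ t < y).
  { apply HI in It. destruct It as [Ha Hb].
    destruct b as [b| |]; simpl in Hb; try easy.
    - exists ((t + b) / 2). split; [|lra]. apply HI. split.
      + destruct a as [a| |]; simpl in *; try easy. lra.
      + simpl. lra.
    - exists (t + 1). split; [|lra]. apply HI. split.
      + destruct a as [a| |]; simpl in *; try easy. lra.
      + simpl. exact I. }
  destruct Hy as [y [Iy Hty]].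
  set (A := Derive f s). set (B := Derive f t).
  pose proof (tangent Iv f t y Hc It Iy (Hder t It)) as T1.
  pose proof (tangent Iv f t s Hc It Is (Hder t It)) as T2.
  pose proof (tangent Iv f s t Hc Is It (Hder s Is)) as T3.
  pose proof (tangent Iv f s m Hc Is Im (Hder s Is)) as T4.
  fold A B in T1, T2, T3, T4.
  pose proof (Hinc t y It Iy Hty) as Hfy.
  assert (HB : 0 < B) by nra.
  assert (HAB : B <= A) by nra.
  pose proof (Hpos s Is). pose proof (Hpos t It).
  set (c := (1 - lam) * f s + lam * f t).
  assert (Key : B * f m <= A * c).
  { assert (E1 : B * f m <= B * f s + B * A * (m - s)).
    { replace (B * f s + B * A * (m - s)) with (B * (f s + A * (m - s))) by ring.
      apply Rmult_le_compat_l; lra. }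
    assert (Ems : m - s = lam * (t - s)) by (unfold m; ring).
    assert (E2 : f t >= f s + B * (t - s)) by lra.
    assert (E3 : c >= f s + lam * B * (t - s)).
    { unfold c. nra. }
    assert (E4 : A * c >= A * f s + A * lam * B * (t - s)) by nra.
    assert (E5 : (A - B) * f s >= 0) by nra.
    rewrite Ems in E1. nra. }
  unfold Rdiv. rewrite Rmult_assoc.
  apply Rmult_le_reg_l with B; [lra|].
  replace (B * (A * (/ B * c))) with (A * c) by (field; lra). exact Key.
Qed.
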